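(* Let $\mathcal{G}=(\mathcal{V},\mathcal{E})$ be a simple undirected graph. For any pair of nodes $i,j\in\mathcal{V}$ at distance $T\ge 1$, $$\bigl(\tilde{C}^{\top}\widehat{B}^{\,T-1}\tilde{C}\bigr)_{j,i}\ \ge\ \bigl(\widehat{A}^{T}\bigr)_{j,i}.$$ Moreover, if $\mathcal{G}$ is $d$-regular, then $(\tilde{C}^{\top}\widehat{B}^{\,T-1}\tilde{C})_{j,i}$ decays only like $O(d^{-T})$, whereas $(\widehat{A}^{T})_{j,i}$ decays like $O((d+1)^{-T})$.
   Context: $A$ is the adjacency matrix, $D_A$ the diagonal degree matrix, and $\widehat{A}=(D_A+I)^{-1/2}(A+I)(D_A+I)^{-1/2}$ is the degree-normalized adjacency matrix with self-loops. Each undirected edge gives two directed edges. The non-backtracking matrix $B\in\{0,1\}^{2|\mathcal{E}|\times 2|\mathcal{E}|}$ has $B_{(\ell\to k),(j\to i)}=1$ if $k=j$ and $\ell\ne i$, and $0$ otherwise. $D$ is diagonal with $D_{(j\to i),(j\to i)}=\sum_{\ell\to k}B_{(j\to i),(\ell\to k)}$, and $\widehat{B}=(D+I)^{-1/2}(B+I)(D+I)^{-1/2}$. $C\in\mathbb{R}^{2|\mathcal{E}|\times|\mathcal{V}|}$ has $C_{(k\to j),i}=1$ if $j=i$ or $k=i$ and $0$ otherwise, and $\tilde{C}_{(k\to j),i}=C_{(k\to j),i}+C_{(j\to k),i}$. *)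

(* Defs.v *)
From HB Require Import structures.
From mathcomp Require Import all_boot all_order all_algebra.
Set Implicit Arguments. Unset Strict Implicit. Unset Printing Implicit Defensive.
Import Order.TTheory GRing.Theory Num.Theory.
Local Open Scope ring_scope.

Definition simple_graph (n : nat) (adj : rel 'I_n) : Prop :=
  (forall u v, adj u v = adj v u) /\ (forall u, ~~ adj u u).

Fixpoint walk_exists (n : nat) (adj : rel 'I_n) (k : nat) (u v : 'I_n) : bool :=
  match k with
  | 0 => u == v
  | k'.+1 => [exists w, adj u w && walk_exists adj k' w v]
  end.

Definition at_distance (n : nat) (adj : rel 'I_n) (u v : 'I_n) (T : nat) : Prop :=
  walk_exists adj T u v /\ (forall k, (k < T)%N -> ~~ walk_exists adj k u v).

Definition degree (n : nat) (adj : rel 'I_n) (v : 'I_n) : nat := #|[set w | adj v w]|.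

Definition regular (n : nat) (adj : rel 'I_n) (d : nat) : Prop :=
  forall v, degree adj v = d.

Section Matrices.
Variables (R : rcfType) (n : nat) (adj : rel 'I_n).

(* directed edges (k -> j), stored as the pair (k, j); each undirected edge
   {k, j} yields the two directed edges (k,j) and (j,k) *)
Definition dedge := {p : 'I_n * 'I_n | adj p.1 p.2}.
Definition nE : nat := #|{: dedge}|.
Definition edge_of (e : 'I_nE) : 'I_n * 'I_n := val (@enum_val dedge _ e).

Definition diag_invsqrt (m : nat) (x : 'I_m -> R) : 'M[R]_m :=
  diag_mx (\row_i (Num.sqrt (x i))^-1).

Definition adjmx : 'M[R]_n := \matrix_(a, b) (adj a b)%:R.
Definition degmx : 'M[R]_n := diag_mx (\row_a (degree adj a)%:R).
Definition Ahat : 'M[R]_n :=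
  let S := diag_invsqrt (fun a => degmx a a + 1) in
  S *m (adjmx + 1%:M) *m S.

Definition NBmx : 'M[R]_nE :=
  \matrix_(e, f) (((edge_of e).2 == (edge_of f).1) &&
                   ((edge_of e).1 != (edge_of f).2))%:R.
Definition NBdeg (e : 'I_nE) : R := \sum_f NBmx e f.
Definition Bhat : 'M[R]_nE :=
  let S := diag_invsqrt (fun e => NBdeg e + 1) in
  S *m (NBmx + 1%:M) *m S.

Definition Cpair (p : 'I_n * 'I_n) (i : 'I_n) : R := ((p.2 == i) || (p.1 == i))%:R.
Definition Cmx : 'M[R]_(nE, n) := \matrix_(e, i) Cpair (edge_of e) i.
Definition Ctilde : 'M[R]_(nE, n) :=
  \matrix_(e, i) (Cpair (edge_of e) i + Cpair ((edge_of e).2, (edge_of e).1) i).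

End Matrices.

(* Main.v *)
Require Import Defs.
From HB Require Import structures.
From mathcomp Require Import all_boot all_order all_algebra.
From mathcomp Require Import ring lra.
Import Order.TTheory GRing.Theory Num.Theory.
Local Open Scope ring_scope.

Section Walks.
Variables (n : nat) (adj : rel 'I_n).
Hypothesis sym : forall u v, adj u v = adj v u.

Local Notation walk := (walk_exists adj).

Lemma walk_snoc k u v :
  walk k.+1 u v = [exists w, walk k u w && adj w v].
Proof.
elim: k u => [|k IH] u /=.
  apply/existsP/existsP => [[w /andP[a /eqP <-]]|[w /andP[/eqP <- a]]].
    by exists u; rewrite a eqxx.
  by exists v; rewrite a eqxx.
apply/existsP/existsP => [[w /andP[a]]|[y /andP[/existsP[w /andP[a h]] b]]].
  move=> h; move: (IH w); rewrite /= h => /esym/existsP[y /andP[h' b]].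
  exists y; rewrite b andbT.
  by apply/existsP; exists w; rewrite a.
exists w; rewrite a /=; have := IH w; rewrite /= => ->.
by apply/existsP; exists y; rewrite h.
Qed.

Lemma walk_sym k u v : walk k u v = walk k v u.
Proof.
elim: k u v => [|k IH] u v; first by rewrite /= eq_sym.
rewrite walk_snoc /=; apply/existsP/existsP => [[w /andP[a h]]|[w /andP[h a]]];
  by exists w; rewrite IH sym ?a ?h.
Qed.

Definition reach m a b := exists k, (k <= m)%N /\ walk k a b.
Definition nw m a b := forall k, (k < m)%N -> ~~ walk k a b.

Lemma reach0 m a : reach m a a.
Proof. by exists 0%N; rewrite /= eqxx. Qed.

Lemma reach_le m m' a b : (m <= m')%N -> reach m a b -> reach m' a b.
Proof. by move=> le [k [lk w]]; exists k; split=> //; apply: leq_trans le. Qed.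

Lemma reach_cons m a b c : adj a b -> reach m b c -> reach m.+1 a c.
Proof.
move=> ab [k [lk w]]; exists k.+1; split=> //=.
by apply/existsP; exists b; rewrite ab.
Qed.

Lemma nw_reach m a b : nw m.+1 a b -> reach m a b -> False.
Proof. by move=> h [k [lk w]]; move: (h k lk); rewrite w. Qed.

Lemma nw_cons m a b c : adj a b -> nw m.+1 a c -> nw m b c.
Proof.
move=> ab h k lk; apply/negP => w; move: (h k.+1 lk) => /negP; apply.
by apply/existsP; exists b; rewrite ab.
Qed.

Lemma nw_le m m' a b : (m' <= m)%N -> nw m a b -> nw m' a b.
Proof. by move=> le h k lk; apply: h; apply: leq_trans le. Qed.

End Walks.
Arguments reach_le {n adj m m' a b}.
Arguments reach_cons {n adj m a b c}.
Arguments nw_reach {n adj m a b}.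
Arguments nw_cons {n adj m a b c}.
Arguments nw_le {n adj m m' a b}.
Arguments reach0 {n adj} m a.
Arguments walk_sym {n adj} sym k u v.

Lemma sum_neq0 (R : nmodType) (I : finType) (F : I -> R) :
  \sum_i F i != 0 -> exists i, F i != 0.
Proof.
case: (pickP (fun i => F i != 0)) => [i Hi|H]; first by exists i.
by rewrite big1 ?eqxx // => i _; move: (H i) => /negbFE/eqP.
Qed.

Lemma exprZmx (R : comPzRingType) k (c : R) (M : 'M[R]_k) m : (c *: M) ^+ m = c ^+ m *: M ^+ m.
Proof.
elim: m => [|m IH]; first by rewrite !expr0 scale1r.
rewrite exprS [in RHS]exprS [X in _ = _ *: X]exprS -!mulmxE IH -scalemxAl -scalemxAr scalerA. done.
Qed.

Lemma powS (R : pzRingType) k (M : 'M[R]_k) m a b :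
  (M ^+ m.+1) a b = \sum_x M a x * (M ^+ m) x b.
Proof. by rewrite exprS -mulmxE mxE. Qed.
Lemma pow0 (R : pzRingType) k (M : 'M[R]_k) a b : (M ^+ 0) a b = (a == b)%:R.
Proof. by rewrite expr0 mxE. Qed.

Lemma mxpow_ge0 (R : numDomainType) k (M : 'M[R]_k) :
  (forall a b, 0 <= M a b) -> forall m a b, 0 <= (M ^+ m) a b.
Proof.
move=> H; elim=> [|m IH] a b; first by rewrite pow0 ler0n.
by rewrite powS sumr_ge0 // => x _; rewrite mulr_ge0.
Qed.

Section Mat.
Variables (R : rcfType) (n : nat) (adj : rel 'I_n).
Hypothesis sym : forall u v, adj u v = adj v u.
Hypothesis irr : forall u, ~~ adj u u.

Local Notation E := 'I_(nE adj).
Local Notation ed := (@edge_of n adj).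
Local Notation reach := (@reach n adj).
Local Notation nw := (@nw n adj).

Lemma edge_adj (e : E) : adj (ed e).1 (ed e).2.
Proof. by rewrite /edge_of; case: (enum_val e). Qed.

Lemma edge_neq (e : E) : (ed e).1 != (ed e).2.
Proof.
by apply/eqP => h; move: (edge_adj e); rewrite h; move: (irr (ed e).2) => /negbTE ->.
Qed.

Lemma sum_edges (G : 'I_n * 'I_n -> R) :
  \sum_(e : E) G (ed e) = \sum_a \sum_b (adj a b)%:R * G (a, b).
Proof.
rewrite /edge_of.
have -> : \sum_(e < nE adj) G (val (@enum_val (dedge adj) _ e)) =
          \sum_(x : dedge adj) G (val x).
  by rewrite (big_enum_val (fun x : dedge adj => G (val x))).
rewrite pair_big /=.
transitivity (\sum_(p | adj p.1 p.2) G p); last first.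
  rewrite big_mkcond /=; apply: eq_bigr => -[a b] _ /=.
  by case: (adj a b); rewrite ?mul1r ?mul0r.
rewrite (reindex_omap (val : dedge adj -> _) insub); last first.
  by move=> p Pp; rewrite insubT.
by apply: eq_bigl=> -[p Pp] /=; rewrite insubT /= Pp eqxx.
Qed.

Lemma sum_pick (G : 'I_n -> 'I_n -> R) c :
  \sum_a \sum_b (adj a b)%:R * ((a == c)%:R * G a b) = \sum_b (adj c b)%:R * G c b.
Proof.
rewrite (bigD1 c) //= [X in _ + X]big1 ?addr0; last first.
  move=> a ac; apply: big1 => b _; move: ac => /negbTE ->; by rewrite mul0r mulr0.
by apply: eq_bigr => b _; rewrite eqxx mul1r.
Qed.

Lemma deg_sum v : \sum_b (adj v b)%:R = (degree adj v)%:R :> R.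
Proof.
rewrite /degree -sum1_card natr_sum [RHS]big_mkcond /=.
by apply: eq_bigr => b _; rewrite !inE; case: (adj v b).
Qed.

Lemma deg_gt0 a b : adj a b -> (0 < degree adj a)%N.
Proof. by move=> ab; rewrite /degree card_gt0; apply/set0Pn; exists b; rewrite inE. Qed.

Lemma NBdegE (e : E) : @NBdeg R n adj e + 1 = (degree adj (ed e).2)%:R.
Proof.
rewrite /NBdeg.
under eq_bigr do rewrite mxE.
rewrite (sum_edges (fun p => (((ed e).2 == p.1) && ((ed e).1 != p.2))%:R : R)).
transitivity (\sum_a \sum_b (adj a b)%:R * ((a == (ed e).2)%:R * ((ed e).1 != b)%:R) + 1 : R).
  congr (_ + _); apply: eq_bigr => a _; apply: eq_bigr => b _ /=.
  by rewrite eq_sym; case: (_ == _); case: (_ != _); rewrite ?mulr1 ?mulr0 ?mul1r ?mul0r.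
rewrite (sum_pick (fun a b => ((ed e).1 != b)%:R)) -deg_sum.
rewrite (bigD1 (ed e).1) //= eqxx mulr0 add0r [RHS](bigD1 (ed e).1) //=.
rewrite sym edge_adj addrC; congr (_ + _); apply: eq_bigr => b /negbTE.
by rewrite eq_sym => ->; rewrite mulr1.
Qed.

Lemma Zv (M : 'M[R]_n) : (forall a b, M a b != 0 -> a = b \/ adj a b) ->
  forall m a b, (M ^+ m) a b != 0 -> reach m a b.
Proof.
move=> HM; elim=> [|m IH] a b.
  rewrite pow0; case ab: (a == b).
    by move/eqP: ab => <- _; apply: reach0.
  by rewrite eqxx.
rewrite powS => /sum_neq0[x]; rewrite mulf_eq0 negb_or => /andP[/HM h /IH r].
case: h r => [<-|ax] r; first exact: reach_le r.
exact: reach_cons ax r.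
Qed.

Lemma Zv0 (M : 'M[R]_n) : (forall a b, M a b != 0 -> a = b \/ adj a b) ->
  forall m a b, nw m.+1 a b -> (M ^+ m) a b = 0.
Proof.
move=> HM m a b h; apply/eqP; apply/negP => /negP /(@Zv M HM) r.
exact: nw_reach h r.
Qed.
Arguments Zv0 [M] _ [m a b].

Lemma ZE (M : 'M[R]_(nE adj)) :
  (forall e f, M e f != 0 -> e = f \/ (ed f).1 = (ed e).2) ->
  forall m e f, (M ^+ m) e f != 0 ->
  reach m (ed e).2 (ed f).2 /\
  ((ed f).1 = (ed e).1 \/ (0 < m)%N /\ reach m.-1 (ed e).2 (ed f).1).
Proof.
move=> HM; elim=> [|m IH] e f.
  rewrite pow0; case ef: (e == f); last by rewrite eqxx.
  move/eqP: ef => <- _.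
  by split; [apply: reach0|left].
rewrite powS => /sum_neq0[x]; rewrite mulf_eq0 negb_or => /andP[/HM h /IH [r1 r2]].
case: h r1 r2 => [<-|xe] r1 r2.
  split; first exact: reach_le r1.
  case: r2 => [->|[m0 r2]]; first by left.
  by right; split=> //; apply: reach_le r2; rewrite leq_pred.
have ex : adj (ed e).2 (ed x).2 by rewrite -xe edge_adj.
split; first exact: reach_cons ex r1.
right; split=> //=.
case: r2 => [->|[m0 r2]]; first by rewrite xe; apply: reach0.
by move: (reach_cons ex r2); rewrite prednK.
Qed.
Arguments ZE [M] _ [m e f].


Local Notation A := (adjmx R adj).
Local Notation NB := (NBmx R adj).
Definition ind (f : E) (v : 'I_n) : R := (((ed f).2 == v) || ((ed f).1 == v))%:R.

Lemma adjE a b : A a b = (adj a b)%:R.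
Proof. by rewrite mxE. Qed.

Lemma A1E a b : (A + 1%:M) a b = (adj a b)%:R + (a == b)%:R.
Proof. by rewrite !mxE. Qed.

Lemma NBE e f : NB e f = (((ed e).2 == (ed f).1) && ((ed e).1 != (ed f).2))%:R.
Proof. by rewrite mxE. Qed.

Lemma NB1E e f : (NB + 1%:M) e f = NB e f + (e == f)%:R.
Proof. by rewrite !mxE. Qed.

Lemma sum_delta k (e : 'I_k) (F : 'I_k -> R) : \sum_f (e == f)%:R * F f = F e.
Proof.
rewrite (bigD1 e) //= eqxx mul1r [X in _ + X]big1 ?addr0 // => f fe.
by rewrite eq_sym (negbTE fe) mul0r.
Qed.

Lemma HA1 a b : (A + 1%:M) a b != 0 -> a = b \/ adj a b.
Proof.
rewrite A1E; case ab: (adj a b); first by right.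
by case: (eqVneq a b) => [->|]; [left|rewrite add0r eqxx].
Qed.

Lemma HNB1 e f : (NB + 1%:M) e f != 0 -> e = f \/ (ed f).1 = (ed e).2.
Proof.
rewrite NB1E NBE; case: (eqVneq (ed e).2 (ed f).1) => [->|_]; first by right.
by case: (eqVneq e f) => [->|]; [left|rewrite /= add0r eqxx].
Qed.

Lemma Vreg m w v : nw m w v -> ((A + 1%:M) ^+ m) w v = (A ^+ m) w v.
Proof.
elim: m w => [|m IH] w h; first by rewrite !pow0.
rewrite !powS; apply: eq_bigr => x _.
case: (eqVneq w x) => [<-|wx].
  by rewrite (Zv0 HA1 h) mulr0 adjE (negbTE (irr w)) mul0r.
rewrite A1E adjE (negbTE wx) addr0.
case wxa: (adj w x); last by rewrite !mul0r.
by rewrite IH //; apply: nw_cons wxa h.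
Qed.

Lemma Q0 m e v : nw m.+1 (ed e).2 v -> nw m.+2 (ed e).1 v ->
  \sum_f ((NB + 1%:M) ^+ m) e f * ind f v = 0.
Proof.
move=> h2 h1; apply: big1 => f _.
case: (eqVneq (((NB + 1%:M) ^+ m) e f) 0) => [->|/(ZE HNB1) [r1 r2]]; first by rewrite mul0r.
rewrite /ind; case: (eqVneq (ed f).2 v) => [fv|_].
  by rewrite fv in r1; case: (nw_reach h2 r1).
case: (eqVneq (ed f).1 v) => [fv|_]; last by rewrite mulr0.
case: r2 => [fe|[_ r2]].
  by move: (h1 0%N isT); rewrite /= -fe fv eqxx.
rewrite fv in r2; case: (nw_reach h2 (reach_le (leq_pred m) r2)).
Qed.

Lemma QL m e v : nw m (ed e).2 v -> nw m.+1 (ed e).1 v ->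
  \sum_f ((NB + 1%:M) ^+ m) e f * ind f v = (A ^+ m) (ed e).2 v.
Proof.
elim: m e => [|m IH] e h2 h1.
  rewrite pow0 (eq_bigr (fun f => (e == f)%:R * ind f v)); last by move=> f _; rewrite pow0.
  rewrite sum_delta /ind.
  by move: (h1 0%N isT); rewrite /= => /negbTE ->; rewrite orbF.
rewrite (eq_bigr (fun f => \sum_g (NB + 1%:M) e g * (((NB + 1%:M) ^+ m) g f * ind f v)));
  last by move=> f _; rewrite powS mulr_suml; apply: eq_bigr => g _; rewrite mulrA.
rewrite exchange_big /=.
under eq_bigr do rewrite -mulr_sumr NB1E mulrDl.
rewrite big_split /= sum_delta Q0 // addr0.
transitivity (\sum_g (((ed e).2 == (ed g).1) && ((ed e).1 != (ed g).2))%:R * (A ^+ m) (ed g).2 v).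
  apply: eq_bigr => g _; rewrite NBE.
  case: (eqVneq (ed e).2 (ed g).1) => [eg|]; last by rewrite !mul0r.
  case: (eqVneq (ed e).1 (ed g).2) => [|_]; first by rewrite !mul0r.
  rewrite IH //; last by rewrite -eg.
  by apply: nw_cons h2; rewrite eg edge_adj.
rewrite (sum_edges (fun p => (((ed e).2 == p.1) && ((ed e).1 != p.2))%:R * (A ^+ m) p.2 v)) /=.
transitivity (\sum_a \sum_b (adj a b)%:R * ((a == (ed e).2)%:R * (((ed e).1 != b)%:R * (A ^+ m) b v))).
  apply: eq_bigr => a _; apply: eq_bigr => b _; rewrite eq_sym.
  by case: (_ == _); case: (_ != _); rewrite ?mul0r ?mul1r ?mulr0.
rewrite sum_pick powS; apply: eq_bigr => b _; rewrite adjE.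
case: (eqVneq (ed e).1 b) => [<-|_]; last by rewrite mul1r.
rewrite (Zv0 (M := A) _ (nw_le _ h1)) ?mulr0 //= => a c; rewrite adjE.
by case: (adj a c) => [_|/=]; [right|rewrite mulr0n eqxx].
Qed.


Local Notation Bh := (Bhat R adj).
Local Notation Ah := (Ahat R adj).
Local Notation Ct := (Ctilde R adj).
Definition sv (x : 'I_n) : R := (Num.sqrt (degree adj x)%:R)^-1.
Definition sa (x : 'I_n) : R := (Num.sqrt ((degree adj x)%:R + 1))^-1.

Lemma BhatE e f : Bh e f = sv (ed e).2 * (NB + 1%:M) e f * sv (ed f).2.
Proof.
rewrite /Bhat /diag_invsqrt /= mul_mx_diag mxE mul_diag_mx mxE.
by rewrite [X in X * _ * _]mxE [X in _ * X]mxE !NBdegE.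
Qed.

Lemma AhatE a b : Ah a b = sa a * (A + 1%:M) a b * sa b.
Proof.
rewrite /Ahat /diag_invsqrt /= mul_mx_diag mxE mul_diag_mx mxE.
rewrite [X in X * _ * _]mxE [X in _ * X]mxE /degmx [diag_mx _ a a]mxE [diag_mx _ b b]mxE.
by rewrite !eqxx !mulr1n !mxE.
Qed.

Lemma sv_ge0 x : 0 <= sv x.
Proof. by rewrite /sv invr_ge0 sqrtr_ge0. Qed.
Lemma sa_ge0 x : 0 <= sa x.
Proof. by rewrite /sa invr_ge0 sqrtr_ge0. Qed.

Lemma NB1_ge0 e f : 0 <= (NB + 1%:M) e f.
Proof. by rewrite NB1E NBE addr_ge0 ?ler0n. Qed.

Lemma Bhat_ge0 e f : 0 <= Bh e f.
Proof. by rewrite BhatE !mulr_ge0 ?sv_ge0 ?NB1_ge0. Qed.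

Lemma Ahat_ge0 a b : 0 <= Ah a b.
Proof. by rewrite AhatE A1E !mulr_ge0 ?sa_ge0 ?addr_ge0 ?ler0n. Qed.

Lemma sa_le_sv x : (0 < degree adj x)%N -> sa x <= sv x.
Proof.
move=> d0; rewrite /sa /sv lef_pV2 ?posrE ?sqrtr_gt0 ?ltr0n //; last first.
  by rewrite ltr_wpDl ?ler0n.
by rewrite ler_sqrt ?lerDl ?addr_ge0 ?ler0n.
Qed.

Lemma sa_le1 x : sa x <= 1.
Proof.
rewrite /sa invf_le1 ?sqrtr_gt0 ?ltr_wpDl ?ler0n //.
by rewrite -[X in X <= _](sqrtr1 R) ler_sqrt ?lerDr ?ler0n ?addr_ge0.
Qed.

Lemma HAh a b : Ah a b != 0 -> a = b \/ adj a b.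
Proof. by rewrite AhatE !mulf_eq0 !negb_or => /andP[/andP[_ /HA1 h] _]. Qed.

Lemma PL m e v : nw m (ed e).2 v -> nw m.+1 (ed e).1 v ->
  (Ah ^+ m) (ed e).2 v <= \sum_f (Bh ^+ m) e f * ((ed f).2 == v)%:R.
Proof.
elim: m e => [|m IH] e h2 h1.
  rewrite pow0 (eq_bigr (fun f => (e == f)%:R * ((ed f).2 == v)%:R)) ?sum_delta //.
  by move=> f _; rewrite pow0.
rewrite (eq_bigr (fun f => \sum_g Bh e g * ((Bh ^+ m) g f * ((ed f).2 == v)%:R)));
  last by move=> f _; rewrite powS mulr_suml; apply: eq_bigr => g _; rewrite mulrA.
rewrite exchange_big /=.
under eq_bigr do rewrite -mulr_sumr.
apply: (le_trans _ (_ : \sum_g NB e g * (sv (ed e).2 * sv (ed g).2 * (Ah ^+ m) (ed g).2 v) <= _)); last first.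
  apply: ler_sum => g _.
  have P0 : 0 <= \sum_f (Bh ^+ m) g f * ((ed f).2 == v)%:R.
    by apply: sumr_ge0 => f _; rewrite mulr_ge0 ?ler0n ?mxpow_ge0 // => *; apply: Bhat_ge0.
  have B0 := Bhat_ge0 e g.
  rewrite [NB e g]NBE; case hb: (_ && _); last by rewrite mul0r mulr_ge0.
  move/andP: hb => [/eqP eg ne]; rewrite mul1r.
  apply: ler_pM; rewrite ?mulr_ge0 ?sv_ge0 ?mxpow_ge0 //; first exact: Ahat_ge0.
    rewrite BhatE [X in _ <= X]mulrAC -[X in X <= _]mulr1 ler_wpM2l ?mulr_ge0 ?sv_ge0 //.
    by rewrite NB1E NBE eg eqxx ne /= lerDl ler0n.
  apply: IH; last by rewrite -eg.
  by apply: nw_cons h2; rewrite eg edge_adj.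
under eq_bigr do rewrite NBE.
rewrite (sum_edges (fun p => (((ed e).2 == p.1) && ((ed e).1 != p.2))%:R *
   (sv (ed e).2 * sv p.2 * (Ah ^+ m) p.2 v))) /=.
set RHS := (X in _ <= X).
have -> : RHS = \sum_a \sum_b (adj a b)%:R * ((a == (ed e).2)%:R *
     (((ed e).1 != b)%:R * (sv (ed e).2 * sv b * (Ah ^+ m) b v))).
  apply: eq_bigr => a _; apply: eq_bigr => b _; rewrite eq_sym.
  by case: (_ == _); case: (_ != _); rewrite ?mul0r ?mul1r ?mulr0.
rewrite sum_pick powS; apply: ler_sum => b _.
have X0 : 0 <= (Ah ^+ m) b v by apply: mxpow_ge0 => *; apply: Ahat_ge0.
have R0 : 0 <= (adj (ed e).2 b)%:R * (((ed e).1 != b)%:R * (sv (ed e).2 * sv b * (Ah ^+ m) b v)).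
  by rewrite !mulr_ge0 ?ler0n ?sv_ge0.
case: (eqVneq (ed e).2 b) => [<-|e2b].
  by rewrite (Zv0 HAh h2) !mulr0.
case: (eqVneq (ed e).1 b) => [<-|e1b].
  by rewrite (Zv0 HAh (nw_le (leqnSn _) h1)) !mulr0.
rewrite AhatE A1E (negbTE e2b) addr0.
case ab: (adj (ed e).2 b); last by rewrite mulr0 !mul0r.
rewrite /= !mulr1n mulr1 !mul1r ler_wpM2r //.
apply: ler_pM; rewrite ?sa_ge0 ?sa_le_sv //; first exact: deg_gt0 ab.
by apply: (@deg_gt0 _ (ed e).2); rewrite sym.
Qed.

Lemma CtE e i : Ct e i = 2 * ind e i.
Proof.
rewrite mxE /Cpair /ind /= (orbC ((ed e).1 == i)).
by rewrite mulr_natl mulr2n.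
Qed.

Lemma rhsE (X : 'M[R]_(nE adj)) j i :
  (Ct^T *m X *m Ct) j i = \sum_e Ct e j * \sum_f X e f * Ct f i.
Proof.
rewrite mxE.
under eq_bigr do rewrite mxE mulr_suml.
rewrite exchange_big /=; apply: eq_bigr => e _; rewrite mulr_sumr.
by apply: eq_bigr => f _; rewrite !mxE mulrA.
Qed.

Lemma part1 m j i : nw m.+1 j i ->
  (Ah ^+ m.+1) j i <= \sum_e Ct e j * \sum_f (Bh ^+ m) e f * Ct f i.
Proof.
move=> h.
have X0 : forall e f, 0 <= (Bh ^+ m) e f by apply: mxpow_ge0 => *; apply: Bhat_ge0.
have Y0 : forall a b, 0 <= (Ah ^+ m) a b by apply: mxpow_ge0 => *; apply: Ahat_ge0.
apply: (le_trans _ (_ : \sum_e ((ed e).1 == j)%:R * (4 * \sum_f (Bh ^+ m) e f * ((ed f).2 == i)%:R) <= _)); last first.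
  apply: ler_sum => e _.
  have -> : ((ed e).1 == j)%:R * (4 * \sum_f (Bh ^+ m) e f * ((ed f).2 == i)%:R) =
    (2 * ((ed e).1 == j)%:R) * (2 * \sum_f (Bh ^+ m) e f * ((ed f).2 == i)%:R) :> R.
    by ring.
  rewrite CtE; apply: ler_pM; rewrite ?mulr_ge0 ?ler0n ?sumr_ge0 //.
  - by move=> f _; rewrite mulr_ge0 ?ler0n.
  - by rewrite ler_wpM2l ?ler0n // /ind; case: (_ == j); case: (_ == j); rewrite ?orbT ?ler0n.
  rewrite mulr_sumr; apply: ler_sum => f _; rewrite CtE mulrCA ler_wpM2l //.
  by rewrite ler_wpM2l ?ler0n // /ind; case: (_ == i); rewrite ?ler0n.
apply: (le_trans _ (_ : \sum_e ((ed e).1 == j)%:R * (4 * (Ah ^+ m) (ed e).2 i) <= _)); last first.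
  apply: ler_sum => e _; case: (eqVneq (ed e).1 j) => [ej|_]; last by rewrite !mul0r.
  rewrite !mul1r ler_wpM2l ?ler0n //; apply: PL; last by rewrite ej.
  by apply: nw_cons h; rewrite -ej edge_adj.
rewrite (sum_edges (fun p => (p.1 == j)%:R * (4 * (Ah ^+ m) p.2 i))) /=.
rewrite (sum_pick (fun a b => 4 * (Ah ^+ m) b i)) powS.
apply: ler_sum => b _.
case: (eqVneq j b) => [<-|jb].
  by rewrite (Zv0 HAh h) mulr0 !mulr_ge0 ?ler0n.
rewrite AhatE A1E (negbTE jb) addr0.
case: (adj j b); last by rewrite mulr0 !mul0r.
rewrite /= !mulr1n mulr1 mul1r ler_wpM2r //.
apply: (le_trans (mulr_ile1 (sa_ge0 _) (sa_ge0 _) (sa_le1 _) (sa_le1 _))).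
by rewrite ler1n.
Qed.


Lemma Bhat_reg d : regular adj d -> Bh = (d%:R)^-1 *: (NB + 1%:M).
Proof.
move=> reg; apply/matrixP => e f; rewrite BhatE [RHS]mxE /sv !reg.
by rewrite mulrAC -invfM -expr2 sqr_sqrtr ?ler0n.
Qed.

Lemma Ahat_reg d : regular adj d -> Ah = ((d%:R + 1)^-1) *: (A + 1%:M).
Proof.
move=> reg; apply/matrixP => a b; rewrite AhatE [RHS]mxE /sa !reg.
by rewrite mulrAC -invfM -expr2 sqr_sqrtr ?addr_ge0 ?ler0n.
Qed.

Lemma ind_split e j : ind e j = ((ed e).1 == j)%:R + ((ed e).2 == j)%:R.
Proof.
rewrite /ind; case: (eqVneq (ed e).1 j) => [h1|h1]; case: (eqVneq (ed e).2 j) => [h2|h2] /=.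
- by move: (edge_neq e); rewrite h1 h2 eqxx.
- by rewrite /= ?mulr1n ?mulr0n ?addr0 ?add0r.
- by rewrite /= ?mulr1n ?mulr0n ?addr0 ?add0r.
- by rewrite /= ?mulr1n ?mulr0n ?addr0 ?add0r.
Qed.

Lemma Qrev0 m e i j : (0 < m)%N -> (ed e).2 = j -> nw m.+1 j i ->
  \sum_f ((NB + 1%:M) ^+ m) e f * ind f i = 0.
Proof.
move=> m0 ej h; apply: big1 => f _.
case: (eqVneq (((NB + 1%:M) ^+ m) e f) 0) => [->|/(ZE HNB1) [r1 r2]]; first by rewrite mul0r.
rewrite ej in r1 r2.
rewrite /ind; case: (eqVneq (ed f).2 i) => [fi|_].
  by rewrite fi in r1; case: (nw_reach h r1).
case: (eqVneq (ed f).1 i) => [fi|_]; last by rewrite mulr0.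
case: r2 => [fe|[_ r2]].
  have ji : adj j i by rewrite -ej -fi fe sym edge_adj.
  have r : reach 1 j i by apply: reach_cons ji (reach0 0 i).
  by case: (nw_reach h (reach_le m0 r)).
rewrite fi in r2; case: (nw_reach h (reach_le (leq_pred m) r2)).
Qed.

Lemma main_sum m j i : walk_exists adj m.+1 j i -> nw m.+1 j i ->
  \sum_e ind e j * \sum_f ((NB + 1%:M) ^+ m) e f * ind f i =
  (if m == 0%N then 2 else 1) * (A ^+ m.+1) j i.
Proof.
move=> w h.
rewrite (eq_bigr (fun e => ((ed e).1 == j)%:R * \sum_f ((NB + 1%:M) ^+ m) e f * ind f i +
   ((ed e).2 == j)%:R * \sum_f ((NB + 1%:M) ^+ m) e f * ind f i)); last first.
  by move=> e _; rewrite ind_split mulrDl.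
rewrite big_split /=.
have -> : \sum_e ((ed e).1 == j)%:R * \sum_f ((NB + 1%:M) ^+ m) e f * ind f i =
    (A ^+ m.+1) j i.
  transitivity (\sum_e ((ed e).1 == j)%:R * (A ^+ m) (ed e).2 i).
    apply: eq_bigr => e _; case: (eqVneq (ed e).1 j) => [ej|_]; last by rewrite !mul0r.
    rewrite QL //; last by rewrite ej.
    by apply: nw_cons h; rewrite -ej edge_adj.
  rewrite (sum_edges (fun p => (p.1 == j)%:R * (A ^+ m) p.2 i)) /=.
  rewrite (sum_pick (fun a b => (A ^+ m) b i)) powS.
  by apply: eq_bigr => b _; rewrite adjE.
case: m w h => [|m] w h /=.
  have ji : (j == i) = false by move: (h 0%N isT) => /= /negbTE.
  transitivity ((A ^+ 1) j i + \sum_e ((ed e).2 == j)%:R * ((ed e).1 == i)%:R).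
    congr (_ + _); apply: eq_bigr => e _.
    rewrite (eq_bigr (fun f => (e == f)%:R * ind f i)) ?sum_delta; last first.
      by move=> f _; rewrite pow0.
    rewrite /ind; case: (eqVneq (ed e).2 j) => [->|_]; last by rewrite !mul0r.
    by rewrite ji.
  rewrite (sum_edges (fun p => (p.2 == j)%:R * (p.1 == i)%:R)) /=.
  transitivity ((A ^+ 1) j i +
     \sum_a \sum_b (adj a b)%:R * ((a == i)%:R * (b == j)%:R)).
    congr (_ + _); apply: eq_bigr => a _; apply: eq_bigr => b _; by rewrite [X in _ * X]mulrC.
  rewrite (sum_pick (fun a b => (b == j)%:R)).
  rewrite (eq_bigr (fun b => (j == b)%:R * (adj i b)%:R)); last first.
    by move=> b _; rewrite mulrC eq_sym.
  rewrite sum_delta expr1 adjE sym.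
  by rewrite mulr_natl mulr2n.
rewrite big1 ?addr0 ?mul1r // => e _.
case: (eqVneq (ed e).2 j) => [ej|_]; last by rewrite mul0r.
by rewrite (@Qrev0 m.+1 e i j isT ej h) mulr0.
Qed.

Lemma main (i j : 'I_n) (T : nat) : (1 <= T)%N -> at_distance adj i j T ->
    ((Ahat R adj ^+ T) j i <=
       ((Ctilde R adj)^T *m (Bhat R adj ^+ T.-1) *m Ctilde R adj) j i)
    /\
    (forall d : nat, regular adj d ->
       ((Ctilde R adj)^T *m (Bhat R adj ^+ T.-1) *m Ctilde R adj) j i
         = (if T == 1%N then 8 else 4)%:R * d%:R * (adjmx R adj ^+ T) j i
             / d%:R ^+ T
       /\
       (Ahat R adj ^+ T) j i = (adjmx R adj ^+ T) j i / (d.+1)%:R ^+ T).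
Proof.
move=> T1 [wT nwT].
have h : nw T j i by move=> k kT; rewrite (walk_sym sym); apply: nwT.
have w : walk_exists adj T j i by rewrite (walk_sym sym).
case: T T1 wT nwT h w => [//|m] _ _ _ h w /=.
split; first by rewrite rhsE; apply: part1.
move=> d reg.
have d0 : d%:R != 0 :> R.
  move: w => /= /existsP [x /andP[jx _]].
  by rewrite pnatr_eq0 -lt0n -(reg j); apply: deg_gt0 jx.
split.
  rewrite (@Bhat_reg d reg) exprZmx rhsE.
  transitivity (4 * (d%:R^-1) ^+ m *
     \sum_e ind e j * \sum_f ((NB + 1%:M) ^+ m) e f * ind f i).
    rewrite !mulr_sumr; apply: eq_bigr => e _; rewrite CtE !mulr_sumr.
    by apply: eq_bigr => f _; rewrite CtE mxE; ring.
  rewrite main_sum //.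
  case: m {h w} => [|m] /=; move: ((A ^+ _) j i) => x; move: d0; move: (d%:R : R) => D D0.
    by field.
  by rewrite exprVn !exprS; field; rewrite D0 expf_neq0.
by rewrite (@Ahat_reg d reg) exprZmx mxE Vreg // natr1 exprVn mulrC.
Qed.

End Mat.

Theorem theorem1 (R : rcfType) (n : nat) (adj : rel 'I_n) :
  simple_graph adj ->
  forall (i j : 'I_n) (T : nat), (1 <= T)%N -> at_distance adj i j T ->
    ((Ahat R adj ^+ T) j i <=
       ((Ctilde R adj)^T *m (Bhat R adj ^+ T.-1) *m Ctilde R adj) j i)
    /\
    (forall d : nat, regular adj d ->
       ((Ctilde R adj)^T *m (Bhat R adj ^+ T.-1) *m Ctilde R adj) j i
         = (if T == 1%N then 8 else 4)%:R * d%:R * (adjmx R adj ^+ T) j i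
             / d%:R ^+ T
       /\
       (Ahat R adj ^+ T) j i = (adjmx R adj ^+ T) j i / (d.+1)%:R ^+ T).
Proof.
by move=> [sym irr]; apply: main.
Qed.
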